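(* Let $m,n$ be positive integers. If $BS(m+1,m)\neq\emptyset$ and $BS(n+1,n)\neq\emptyset$, then $BS(m',m')\neq\emptyset$, where $m'=(2m+1)(2n+1)$.
   Context: For a sequence $\mathbf{s}=(s_0,\dots,s_{l-1})\in\{\pm1\}^l$ and an integer $j\ge 0$, its non-periodic autocorrelation is $N_{\mathbf{s}}(j)=\sum_{i=0}^{l-j-1}s_is_{i+j}$ if $0\le j<l$ and $N_{\mathbf{s}}(j)=0$ otherwise. For positive integers $p,q$, $BS(p,q)$ denotes the set of quadruples $(\mathbf{a},\mathbf{b},\mathbf{c},\mathbf{d})$ of $(\pm1)$-sequences of lengths $p,p,q,q$ respectively (base sequences) such that $N_{\mathbf{a}}(j)+N_{\mathbf{b}}(j)+N_{\mathbf{c}}(j)+N_{\mathbf{d}}(j)=0$ for every integer $j\ge 1$. *)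

(* Defs.v *)
From mathcomp Require Import all_boot all_order all_algebra.
Set Implicit Arguments. Unset Strict Implicit. Unset Printing Implicit Defensive.
Import Order.TTheory GRing.Theory Num.Theory.
Local Open Scope ring_scope.

Definition pm1_seq (l : nat) (s : seq int) : Prop :=
  size s = l /\ all (fun x => (x == 1) || (x == -1)) s.

(* Non-periodic autocorrelation N_s(j) = sum_{i=0}^{l-j-1} s_i s_{i+j}
   (the sum is empty, hence 0, when j >= l). *)
Definition naf (s : seq int) (j : nat) : int :=
  \sum_(0 <= i < size s - j) s`_i * s`_(i + j).

Definition is_base_seqs (p q : nat) (a b c d : seq int) : Prop :=
  [/\ pm1_seq p a, pm1_seq p b, pm1_seq q c, pm1_seq q d &
      forall j : nat, (1 <= j)%N -> naf a j + naf b j + naf c j + naf d j = 0].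

Definition BS_nonempty (p q : nat) : Prop :=
  exists a b c d : seq int, is_base_seqs p q a b c d.

(* Main.v *)
Require Import Defs.
From mathcomp Require Import all_boot all_order all_algebra.
From mathcomp Require Import ring zify.
Set Implicit Arguments. Unset Strict Implicit. Unset Printing Implicit Defensive.
Import Order.TTheory GRing.Theory Num.Theory.
Local Open Scope ring_scope.

(* Proof via an octonion-type (Cayley-Dickson) Hermitian composition of the
   interleaved base sequences, laid out as a Kronecker product. *)

Lemma sum_cut (F : nat -> int) L L' : (L' <= L)%N -> (forall k, (L' <= k)%N -> (k < L)%N -> F k = 0) ->
  \sum_(k < L) F k = \sum_(k < L') F k.
Proof.
move=> le FL.
rewrite -(big_mkord xpredT F) -(big_mkord xpredT F) (big_cat_nat (leq0n L') le) /=.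
rewrite [X in _ + X]big_nat_cond [X in _ + X]big1 ?addr0 // => k /andP [/andP [H1 H2] _]; exact: FL.
Qed.

Lemma acoef_lo (s : seq int) j : (j < size s)%N ->
  (Poly s * Poly (rev s))`_(size s - 1 - j) = naf s j.
Proof.
move=> hj; rewrite coefM /naf big_mkord.
have -> : (size s - 1 - j).+1 = (size s - j)%N by lia.
apply: eq_bigr => [[k hk]] _ /=.
rewrite !coef_Poly nth_rev; last by set l := size s in hj hk *; lia.
congr (_ * s`_ _); set l := size s in hj hk *; lia.
Qed.

Lemma acoef_hi (s : seq int) j : (0 < size s)%N ->
  (Poly s * Poly (rev s))`_(size s - 1 + j) = naf s j.
Proof.
move=> pos; rewrite coefMr.
rewrite (@sum_cut (fun k => (Poly s)`_(size s - 1 + j - k) * (Poly (rev s))`_k) _ (size s)); [|lia|].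
2: { by move=> k hk _; rewrite !coef_Poly [X in _ * X]nth_default ?mulr0 // size_rev. }
rewrite (reindex_inj rev_ord_inj) /=.
rewrite /naf big_mkord.
rewrite (@sum_cut (fun k => (Poly s)`_(size s - 1 + j - (size s - k.+1)) * (Poly (rev s))`_(size s - k.+1)) _ (size s - j)); [|lia|].
2: { move=> k hk hk2; rewrite !coef_Poly [X in X * _]nth_default ?mul0r //.
     set l := size s in hk hk2 *; lia. }
apply: eq_bigr => [[k hk]] _ /=.
rewrite !coef_Poly nth_rev; last by set l := size s in hk *; lia.
rewrite mulrC; congr (s`_ _ * s`_ _); set l := size s in hk pos *; lia.
Qed.

Lemma naf0 (s : seq int) : all (fun x => (x == 1) || (x == -1)) s -> naf s 0 = (size s)%:R.
Proof.
move=> /allP H; rewrite /naf subn0 big_mkord.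
rewrite (eq_bigr (fun _ => 1)) ?sumr_const ?card_ord //.
move=> [i hi] _ /=; rewrite addn0.
have /H /orP [/eqP -> | /eqP ->] := mem_nth 0 hi; by [].
Qed.
Definition Vx (s : seq int) (par : bool) : {poly int} :=
  if par then 'X * (Poly s \Po 'X^2) else Poly s \Po 'X^2.
Definition fx (s : seq int) (par : bool) (r : nat) : int :=
  if odd r == par then s`_(r./2) else 0.

Lemma coef_Vx s par r : (Vx s par)`_r = fx s par r.
Proof.
rewrite /Vx /fx; case: par.
- rewrite coefXM; case: r => [|r] //=.
  rewrite coef_comp_poly_Xn // coef_Poly dvdn2 divn2 uphalf_half.
  by case: (odd r).
- rewrite coef_comp_poly_Xn // coef_Poly dvdn2 divn2.
  by case: (odd r).
Qed.

Lemma kron_coef (K : nat) (p q : {poly int}) r k : (0 < K)%N ->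
  (forall i, (K <= i)%N -> p`_i = 0) -> (r < K)%N ->
  (p * (q \Po 'X^K))`_(r + k * K) = p`_r * q`_k.
Proof.
move=> K0 pK rK; elim/poly_ind: q k => [|q c IH] k.
  by rewrite comp_poly0 mulr0 !coef0 mulr0.
rewrite comp_polyD comp_polyM comp_polyX comp_polyC mulrDr coefD mulrA coefMXn coefMC.
rewrite coefD coefMX coefC.
case: k => [|k].
  by rewrite mul0n addn0 rK /= !add0r.
have -> : (r + k.+1 * K < K)%N = false by rewrite mulSn; lia.
rewrite pK; last by rewrite mulSn; lia.
have -> : (r + k.+1 * K - K = r + k * K)%N by rewrite mulSn; lia.
by rewrite IH mul0r addr0 /= addr0.
Qed.
Lemma naf_big (s : seq int) j : (size s <= j)%N -> naf s j = 0.
Proof. by move=> H; rewrite /naf big_geq //; lia. Qed.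

Lemma normG (m : nat) (a b c d : seq int) : (0 < m)%N ->
  pm1_seq m.+1 a -> pm1_seq m.+1 b -> pm1_seq m c -> pm1_seq m d ->
  (forall j, (1 <= j)%N -> naf a j + naf b j + naf c j + naf d j = 0) ->
  Poly a * Poly (rev a) + Poly b * Poly (rev b) + 'X * (Poly c * Poly (rev c) + Poly d * Poly (rev d))
  = (((4 * m + 2)%N)%:R)%:P * 'X^m.
Proof.
move=> m0 [Ha pa] [Hb pb] [Hc pc] [Hd pd] Hbs.
apply/polyP => i; rewrite coefCM coefXn !coefD coefXM !coefD.
case: (ltngtP i m) => [hlt|hgt|->].
- have [j [-> hj]] : exists j, i = (m - j)%N /\ (1 <= j <= m)%N by exists (m - i)%N; lia.
  have -> : (m - j = size a - 1 - j)%N by rewrite Ha; lia.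
  rewrite acoef_lo; last by rewrite Ha; lia.
  have -> : (size a - 1 - j = size b - 1 - j)%N by rewrite Ha Hb.
  rewrite acoef_lo; last by rewrite Hb; lia.
  case: eqP => [j0|jn].
  + have jm : j = m by move: j0; rewrite Hb; lia.
    rewrite jm mulr0 addr0.
    have := Hbs m; rewrite (@naf_big c) ?(@naf_big d) ?Hc ?Hd // !addr0 => -> //.
  + have -> : ((size b - 1 - j).-1 = size c - 1 - j)%N by rewrite Hb Hc; lia.
    rewrite acoef_lo; last by move: jn; rewrite Hb Hc; lia.
    have -> : (size c - 1 - j = size d - 1 - j)%N by rewrite Hc Hd.
    rewrite acoef_lo; last by move: jn; rewrite Hb Hd; lia.
    by rewrite mulr0 addrA Hbs //; lia.
- have [j [-> hj]] : exists j, i = (m + j)%N /\ (1 <= j)%N by exists (i - m)%N; lia.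
  have -> : (m + j = size a - 1 + j)%N by rewrite Ha; lia.
  rewrite acoef_hi; last by rewrite Ha.
  have -> : (size a - 1 + j = size b - 1 + j)%N by rewrite Ha Hb.
  rewrite acoef_hi; last by rewrite Hb.
  have -> : (size b - 1 + j == 0)%N = false by rewrite Hb; lia.
  have -> : ((size b - 1 + j).-1 = size c - 1 + j)%N by rewrite Hb Hc; lia.
  rewrite acoef_hi; last by rewrite Hc.
  have -> : (size c - 1 + j = size d - 1 + j)%N by rewrite Hc Hd.
  rewrite acoef_hi; last by rewrite Hd.
  by rewrite mulr0 addrA Hbs.
- have -> : (m = size a - 1 - 0)%N by rewrite Ha; lia.
  rewrite acoef_lo; last by rewrite Ha.
  have -> : (size a - 1 - 0 = size b - 1 - 0)%N by rewrite Ha Hb.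
  rewrite acoef_lo; last by rewrite Hb.
  have -> : (size b - 1 - 0 == 0)%N = false by rewrite Hb; lia.
  have -> : ((size b - 1 - 0).-1 = size c - 1 - 0)%N by rewrite Hb Hc; lia.
  rewrite acoef_lo; last by rewrite Hc.
  have -> : (size c - 1 - 0 = size d - 1 - 0)%N by rewrite Hc Hd.
  rewrite acoef_lo; last by rewrite Hd.
  rewrite !naf0 // Ha Hb Hc Hd.
  rewrite mulr1 -!natrD; congr (_%:R); lia.

Qed.

Lemma normV (m : nat) (a b c d : seq int) : (0 < m)%N ->
  pm1_seq m.+1 a -> pm1_seq m.+1 b -> pm1_seq m c -> pm1_seq m d ->
  (forall j, (1 <= j)%N -> naf a j + naf b j + naf c j + naf d j = 0) ->
  Vx a false * Vx (rev a) false + Vx b false * Vx (rev b) false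
  + Vx c true * Vx (rev c) true + Vx d true * Vx (rev d) true
  = (((4 * m + 2)%N)%:R)%:P * 'X^(2 * m).
Proof.
move=> m0 Ha Hb Hc Hd Hbs.
have -> : Vx a false * Vx (rev a) false + Vx b false * Vx (rev b) false
  + Vx c true * Vx (rev c) true + Vx d true * Vx (rev d) true =
  (Poly a * Poly (rev a) + Poly b * Poly (rev b) + 'X * (Poly c * Poly (rev c) + Poly d * Poly (rev d))) \Po 'X^2.
  by rewrite /Vx !comp_polyD !comp_polyM comp_polyX; ring.
by rewrite (normG m0 Ha Hb Hc Hd Hbs) comp_polyM comp_polyC comp_Xn_poly -exprM mulnC.
Qed.

Definition tm (K : nat) (sx : seq int) (px cx : bool) (sy : seq int) (py cy : bool) : {poly int} :=
  Vx (if cx then rev sx else sx) px * (Vx (if cy then rev sy else sy) py \Po 'X^K).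

Definition Pout (K : nat) (a b c d e f g h : seq int) (bb : bool) (k : nat) : {poly int} :=
  let t := fun sx px cx sy py cy => tm K sx px (cx (+) bb) sy py (cy (+) bb) in
  match k with
  | 0 => t a false false e false false - t b false true g true false
         - t c true true f false false - t d true false h true true
  | 1 => t b false false e false false + t a false true g true false
         - t c true true h true false + t d true false f false true
  | 2 => t c true false e false false - t d true false g true true
         + t a false true f false false + t b false true h true false
  | _ => t c true false g true false + t d true false e false true
         - t b false false f false false + t a false false h true false
  end.

Lemma Pout_id K a b c d e f g h :
  \sum_(k < 4) Pout K a b c d e f g h false k * Pout K a b c d e f g h true k =
  (Vx a false * Vx (rev a) false + Vx b false * Vx (rev b) false
  + Vx c true * Vx (rev c) true + Vx d true * Vx (rev d) true) *
  ((Vx e false * Vx (rev e) false + Vx f false * Vx (rev f) false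
  + Vx g true * Vx (rev g) true + Vx h true * Vx (rev h) true) \Po 'X^K).
Proof.
rewrite !big_ord_recr big_ord0 /= /Pout /tm /= !comp_polyD !comp_polyM.
ring.
Qed.

Lemma fx_big s par L r : size s = (if par then L else L.+1) -> (2 * L < r)%N -> fx s par r = 0.
Proof.
rewrite /fx; case: eqP => // hp Hs hr; rewrite nth_default //.
have := odd_double_half r; rewrite hp -addnn.
by case: par Hs hp => -> hp /=; lia.
Qed.

Lemma half_eq x y (b : bool) : x = (b + y.*2)%N -> x./2 = y.
Proof. by move->; rewrite half_bit_double. Qed.

Lemma fx_rev s par L r : size s = (if par then L else L.+1) -> (r <= 2 * L)%N ->
  fx (rev s) par r = fx s par (2 * L - r).
Proof.
move=> Hs hr; rewrite /fx oddB // oddM /=.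
case: eqP => // hp.
have hr2 := odd_double_half r; rewrite hp -addnn in hr2.
rewrite nth_rev; last by case: par Hs hp hr2 => -> hp hr2 /=; lia.
congr (s`_ _); symmetry; apply: (@half_eq _ _ par).
rewrite -addnn; case: par Hs hp hr2 => -> hp hr2 /=; lia.
Qed.

Definition pm (x : int) := (x == 1) || (x == -1).

Lemma pmM x y : pm x -> pm y -> pm (x * y).
Proof. by case/orP => /eqP -> /orP [] /eqP ->; rewrite /pm ?mulr1 ?mulrN1 ?mulN1r ?opprK ?eqxx ?orbT. Qed.

Lemma pmN x : pm x -> pm (- x).
Proof. by case/orP => /eqP ->; rewrite /pm ?opprK ?eqxx ?orbT. Qed.

Lemma fx_pm s par L r : all pm s -> size s = (if par then L else L.+1) -> (r <= 2 * L)%N ->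
  odd r = par -> pm (fx s par r).
Proof.
move=> /allP Hp Hs hr hp; rewrite /fx hp eqxx; apply: Hp; apply: mem_nth.
have := odd_double_half r; rewrite hp -addnn.
by case: par Hs hp => -> hp /=; lia.
Qed.

Lemma fx_zero s par r : odd r != par -> fx s par r = 0.
Proof. by rewrite /fx => /negbTE ->. Qed.

Lemma coef_tm m sx px cx sy py cy r q : size sx = (if px then m else m.+1) -> (r < (2 * m).+1)%N ->
  (tm (2 * m).+1 sx px cx sy py cy)`_(r + q * (2 * m).+1) =
  fx (if cx then rev sx else sx) px r * fx (if cy then rev sy else sy) py q.
Proof.
rewrite /tm => Hs hr; rewrite kron_coef //; first by rewrite !coef_Vx.
move=> i hi; rewrite coef_Vx (@fx_big _ _ m) //.
by case: cx; rewrite ?size_rev.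
Qed.

Lemma Pout_zero m n a b c d e f g h :
  size a = m.+1 -> size b = m.+1 -> size c = m -> size d = m ->
  size e = n.+1 -> size f = n.+1 -> size g = n -> size h = n ->
  forall k (bb : bool) i, ((2 * m).+1 * (2 * n).+1 <= i)%N ->
  (Pout (2 * m).+1 a b c d e f g h bb k)`_i = 0.
Proof.
move=> Ha Hb Hc Hd He Hf Hg Hh k bb i hi.
rewrite (div.divn_eq i (2 * m).+1) addnC.
have hr : (i %% (2 * m).+1 < (2 * m).+1)%N by rewrite ltn_pmod.
have hq : (2 * n < i %/ (2 * m).+1)%N by rewrite leq_divRL // mulnC.
move: (i %% _)%N (i %/ _)%N hr hq => r q hr hq.
have Z : forall s p, size s = (if p then n else n.+1) -> fx s p q = 0 /\ fx (rev s) p q = 0.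
  by move=> s p Hs; split; apply: (@fx_big _ _ n) => //; rewrite size_rev.
have [ze zre] := Z e false He; have [zf zrf] := Z f false Hf.
have [zg zrg] := Z g true Hg; have [zh zrh] := Z h true Hh.
by case: k => [|[|[|k]]]; case: bb; rewrite /Pout /= !(coefD, coefN) !coef_tm ?Ha ?Hb ?Hc ?Hd //=
  ?ze ?zre ?zf ?zrf ?zg ?zrg ?zh ?zrh !mulr0 ?subr0 ?addr0 ?oppr0.
Qed.

Lemma idx_rev m n r q : (r <= 2 * m)%N -> (q <= 2 * n)%N ->
  ((2 * m).+1 * (2 * n).+1 - 1 - (r + q * (2 * m).+1) = (2 * m - r) + (2 * n - q) * (2 * m).+1)%N.
Proof.
move=> hr hq; rewrite mulnBl.
have := leq_mul hq (leqnn (2 * m).+1).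
move: (q * (2 * m).+1)%N => Q hQ.
rewrite [((2 * m).+1 * _)%N]mulnC mulSn.
move: ((2 * n) * (2 * m).+1)%N hQ => P hP.
lia.
Qed.

Lemma Pout_rev m n a b c d e f g h :
  size a = m.+1 -> size b = m.+1 -> size c = m -> size d = m ->
  size e = n.+1 -> size f = n.+1 -> size g = n -> size h = n ->
  forall k i, (i < (2 * m).+1 * (2 * n).+1)%N ->
  (Pout (2 * m).+1 a b c d e f g h true k)`_i =
  (Pout (2 * m).+1 a b c d e f g h false k)`_((2 * m).+1 * (2 * n).+1 - 1 - i).
Proof.
move=> Ha Hb Hc Hd He Hf Hg Hh k i hi.
rewrite (divn_eq i (2 * m).+1) addnC.
have hr : (i %% (2 * m).+1 < (2 * m).+1)%N by rewrite ltn_pmod.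
have hq : (i %/ (2 * m).+1 < (2 * n).+1)%N by rewrite ltn_divLR // mulnC.
move: (i %% _)%N (i %/ _)%N hr hq => r q hr hq.
rewrite idx_rev; [|lia|lia].
have hr' : (2 * m - r < (2 * m).+1)%N by lia.
have hr1 : (r <= 2 * m)%N by lia.
have hr2 : (2 * m - r <= 2 * m)%N by lia.
have hq1 : (q <= 2 * n)%N by lia.
have hq2 : (2 * n - q <= 2 * n)%N by lia.
have ra := @fx_rev a false m; have rb := @fx_rev b false m.
have rc := @fx_rev c true m; have rd := @fx_rev d true m.
have re := @fx_rev e false n; have rf := @fx_rev f false n.
have rg := @fx_rev g true n; have rh := @fx_rev h true n.
case: k => [|[|[|k]]]; rewrite /Pout /= !(coefD, coefN) !coef_tm ?Ha ?Hb ?Hc ?Hd //=;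
  rewrite ?ra ?rb ?rc ?rd ?re ?rf ?rg ?rh ?Ha ?Hb ?Hc ?Hd ?He ?Hf ?Hg ?Hh // ?subKn //; ring.
Qed.

Lemma fx_zero_t s r : odd r = true -> fx s false r = 0.
Proof. by rewrite /fx => ->. Qed.
Lemma fx_zero_f s r : odd r = false -> fx s true r = 0.
Proof. by rewrite /fx => ->. Qed.

Lemma Pout_pm m n a b c d e f g h :
  size a = m.+1 -> size b = m.+1 -> size c = m -> size d = m ->
  size e = n.+1 -> size f = n.+1 -> size g = n -> size h = n ->
  all pm a -> all pm b -> all pm c -> all pm d ->
  all pm e -> all pm f -> all pm g -> all pm h ->
  forall k i, (i < (2 * m).+1 * (2 * n).+1)%N ->
  pm ((Pout (2 * m).+1 a b c d e f g h false k)`_i).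
Proof.
move=> Ha Hb Hc Hd He Hf Hg Hh pa pb pc pd pe pf pg ph k i hi.
rewrite (divn_eq i (2 * m).+1) addnC.
have hr : (i %% (2 * m).+1 < (2 * m).+1)%N by rewrite ltn_pmod.
have hq : (i %/ (2 * m).+1 < (2 * n).+1)%N by rewrite ltn_divLR // mulnC.
move: (i %% _)%N (i %/ _)%N hr hq => r q hr hq.
have hr1 : (r <= 2 * m)%N by lia.
have hq1 : (q <= 2 * n)%N by lia.
have Px : forall s p, all pm s -> size s = (if p then m else m.+1) -> odd r = p ->
   pm (fx s p r) /\ pm (fx (rev s) p r).
  move=> s p ps Hs hp; split; apply: (@fx_pm _ _ m) => //; rewrite ?all_rev ?size_rev //.
have Py : forall s p, all pm s -> size s = (if p then n else n.+1) -> odd q = p ->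
   pm (fx s p q) /\ pm (fx (rev s) p q).
  move=> s p ps Hs hp; split; apply: (@fx_pm _ _ n) => //; rewrite ?all_rev ?size_rev //.
case: k => [|[|[|k]]]; rewrite /Pout /= !(coefD, coefN) !coef_tm ?Ha ?Hb ?Hc ?Hd //=;
  case hro: (odd r); case hqo: (odd q).
all: (first [rewrite !(fx_zero_t _ hro) | rewrite !(fx_zero_f _ hro)]);
     (first [rewrite !(fx_zero_t _ hqo) | rewrite !(fx_zero_f _ hqo)]);
     rewrite ?mul0r ?mulr0 ?oppr0 ?addr0 ?add0r ?subr0 ?sub0r.
all: repeat (apply: pmN || apply: pmM).
all: first [apply: (@fx_pm _ _ m r) | apply: (@fx_pm _ _ n q)]; rewrite ?all_rev ?size_rev //.
Qed.

Lemma idx_top m n : ((2 * m).+1 * (2 * n).+1 - 1 = 2 * m + 2 * n * (2 * m).+1)%N.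
Proof.
rewrite mulnS [(_ * (2 * n))%N]mulnC.
move: (2 * n * (2 * m).+1)%N => P; lia.
Qed.



Theorem theorem1p1 (m n : nat) :
  (0 < m)%N -> (0 < n)%N ->
  BS_nonempty m.+1 m -> BS_nonempty n.+1 n ->
  BS_nonempty ((2 * m + 1) * (2 * n + 1))%N ((2 * m + 1) * (2 * n + 1))%N.
Proof.
move=> m0 n0 [a [b [c [d [[Ha pa] [Hb pb] [Hc pc] [Hd pd] Hab]]]]]
  [e [f [g [h [[He pe] [Hf pf] [Hg pg] [Hh ph] Hef]]]]].
rewrite !addn1.
set L := ((2 * m).+1 * (2 * n).+1)%N.
pose P bb k := Pout (2 * m).+1 a b c d e f g h bb k.
pose S k := mkseq (fun i => (P false k)`_i) L.
have Z := @Pout_zero m n a b c d e f g h Ha Hb Hc Hd He Hf Hg Hh.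
have RV := @Pout_rev m n a b c d e f g h Ha Hb Hc Hd He Hf Hg Hh.
have PS : forall k, Poly (S k) = P false k.
  move=> k; apply/polyP => i; rewrite coef_Poly.
  case: (ltnP i L) => hi; first by rewrite nth_mkseq.
  by rewrite nth_default ?size_mkseq // /P Z.
have PR : forall k, Poly (rev (S k)) = P true k.
  move=> k; apply/polyP => i; rewrite coef_Poly.
  case: (ltnP i L) => hi.
    rewrite nth_rev ?size_mkseq // nth_mkseq; last by rewrite /L; lia.
    rewrite /P RV //; congr (_`_ _); rewrite /L; lia.
  by rewrite nth_default ?size_rev ?size_mkseq // /P Z.
have pmS : forall k, pm1_seq L (S k).
  move=> k; split; first by rewrite size_mkseq.
  apply/allP => x /mapP [i]; rewrite mem_iota add0n => /andP [_ hi] ->.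
  exact: (Pout_pm Ha Hb Hc Hd He Hf Hg Hh pa pb pc pd pe pf pg ph).
exists (S 0%N), (S 1%N), (S 2%N), (S 3%N); split; try exact: pmS.
move=> j hj.
case: (ltnP j L) => hjL; last first.
  by rewrite !naf_big ?size_mkseq // !addr0.
have NC : forall k, naf (S k) j = (P false k * P true k)`_(L - 1 - j).
  move=> k; rewrite -PS -PR -acoef_lo ?size_mkseq //.
rewrite !NC -!coefD.
have -> : P false 0%N * P true 0%N + P false 1%N * P true 1%N + P false 2%N * P true 2%N
  + P false 3%N * P true 3%N = \sum_(k < 4) P false k * P true k.
  by rewrite !big_ord_recr big_ord0 /= add0r.
rewrite /P Pout_id (normV m0 (conj Ha pa) (conj Hb pb) (conj Hc pc) (conj Hd pd) Hab)
  (normV n0 (conj He pe) (conj Hf pf) (conj Hg pg) (conj Hh ph) Hef).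
rewrite comp_polyM comp_polyC comp_Xn_poly -exprM.
have -> : forall (x y : int) (u v : nat), (x%:P * 'X^u) * (y%:P * 'X^v) = (x * y)%:P * 'X^(u + v).
  by move=> x y u v; rewrite polyCM exprD; ring.
rewrite coefCM coefXn.
have -> : (L - 1 - j == 2 * m + (2 * m).+1 * (2 * n))%N = false.
  by rewrite /L; move: (idx_top m n); rewrite [(2 * n * _)%N]mulnC; lia.
by rewrite mulr0.
Qed.
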